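(* For every integer $n\ge 4$, $px_{3,2}(K_n)=2$.
   Context: All graphs are finite, simple and undirected. An edge-coloring of a graph may assign the same color to adjacent edges. A tree $T$ in an edge-colored graph is a proper tree if no two adjacent edges of $T$ receive the same color. For $S\subseteq V(G)$ with $|S|\ge 2$, an $S$-tree is a tree in $G$ containing all vertices of $S$. $S$-trees $T_1,\dots,T_\ell$ are internally disjoint if $E(T_i)\cap E(T_j)=\emptyset$ and $V(T_i)\cap V(T_j)=S$ for all $i\ne j$. For a connected graph $G$ of order $n$ and integers $k,\ell$ with $2\le k\le n$ and $1\le \ell\le \kappa_k(G)$ (where $\kappa_k(G)$ is the minimum, over all $k$-subsets $S$ of $V(G)$, of the maximum number of internally disjoint $S$-trees), the $(k,\ell)$-proper index $px_{k,\ell}(G)$ is the minimum number of colors in an edge-coloring of $G$ such that for every $k$-subset $S$ of $V(G)$ there exist $\ell$ internally disjoint proper $S$-trees. *)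

(* Defs.v *)
From mathcomp Require Import all_boot.
Set Implicit Arguments. Unset Strict Implicit. Unset Printing Implicit Defensive.

Section Defs.
Variable T : finType.

Definition simple_graph (adj : rel T) : Prop :=
  (forall x, ~~ adj x x) /\ (forall x y, adj x y = adj y x).

Definition edges (adj : rel T) : {set {set T}} :=
  [set e : {set T} | [exists x, exists y, adj x y && (e == [set x; y])]].

(* An edge-coloring with (at most) c colors: a color in 'I_c for each edge
   (values on non-edges are irrelevant). *)
Definition coloring (c : nat) := {set T} -> 'I_c.

Definition erel (E : {set {set T}}) : rel T := fun x y => [set x; y] \in E.

Definition is_tree (adj : rel T) (V : {set T}) (E : {set {set T}}) : Prop :=
  [/\ E \subset edges adj,
      (forall e, e \in E -> e \subset V),
      V != set0,
      (forall x y, x \in V -> y \in V -> connect (erel E) x y)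
    & #|E| + 1 = #|V| ].

Definition proper_tree c (col : coloring c) (E : {set {set T}}) : Prop :=
  forall e1 e2, e1 \in E -> e2 \in E -> e1 != e2 ->
    (e1 :&: e2 != set0) -> col e1 != col e2.

Definition has_disjoint_proper_S_trees (adj : rel T) c (col : coloring c)
    (S : {set T}) (l : nat) : Prop :=
  exists (V : 'I_l -> {set T}) (E : 'I_l -> {set {set T}}),
    [/\ (forall i, is_tree adj (V i) (E i)),
        (forall i, S \subset V i),
        (forall i, proper_tree col (E i)),
        (forall i j, i != j -> [disjoint E i & E j])
      & (forall i j, i != j -> V i :&: V j = S)].

Definition kl_proper_coloring (adj : rel T) (k l : nat) c (col : coloring c)
  : Prop :=
  forall S : {set T}, #|S| = k -> has_disjoint_proper_S_trees adj col S l.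

Definition px_eq (adj : rel T) (k l m : nat) : Prop :=
  (exists col : coloring m, kl_proper_coloring adj k l col) /\
  (forall c (col : coloring c), kl_proper_coloring adj k l col -> m <= c).

End Defs.

Definition Kn (n : nat) : rel 'I_n := fun x y => x != y.
Arguments Kn n : clear implicits.

(* Main.v *)
Require Import Defs.
From mathcomp Require Import all_boot.
Set Implicit Arguments. Unset Strict Implicit. Unset Printing Implicit Defensive.

Section Gen.
Variable T : eqType.
Variable cv : T -> T -> bool.

Fixpoint alt (s : seq T) : bool :=
  match s with
  | a :: r => match r with
              | b :: c :: _ => (cv a b != cv b c) && alt r
              | _ => true end
  | [::] => true end.

Fixpoint pairs (s : seq T) : seq (T * T) :=
  match s with
  | a :: r => match r with
              | b :: _ => (a, b) :: pairs r
              | [::] => [::] end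
  | [::] => [::] end.

Lemma altE a b c r : alt [:: a, b, c & r] = (cv a b != cv b c) && alt [:: b, c & r].
Proof. by []. Qed.

Definition sameedge (e f : T * T) :=
  ((e.1 == f.1) && (e.2 == f.2)) || ((e.1 == f.2) && (e.2 == f.1)).

Definition ok (S p1 p2 : seq T) : bool :=
  [&& uniq p1, uniq p2, alt p1, alt p2, all (fun x => x \in p1) S,
      all (fun x => x \in p2) S, all (fun x => (x \in p2) ==> (x \in S)) p1
    & all (fun e => all (fun f => ~~ sameedge e f) (pairs p2)) (pairs p1)].

Lemma pairs_mem (s : seq T) e : e \in pairs s -> (e.1 \in s) && (e.2 \in s).
Proof.
elim: s => [|a [|b r] IH] //=.
rewrite inE => /orP[/eqP -> /=|]; first by rewrite !inE !eqxx orbT.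
by move=> /IH /andP[h1 h2]; rewrite h1 orbT inE h2 orbT.
Qed.
End Gen.

Section Transfer.
Variables (A B : eqType) (cvA : A -> A -> bool) (cvB : B -> B -> bool).
Variables (f : A -> B) (D : seq A).
Hypothesis finj : {in D &, injective f}.
Hypothesis fcv : {in D &, forall u v, cvB (f u) (f v) = cvA u v}.

Lemma alt_map p : all (fun x => x \in D) p -> alt cvB (map f p) = alt cvA p.
Proof.
elim: p => [|a [|b [|c r]] IH] // h.
have /and4P[ha hb hc hr] : [&& a \in D, b \in D, c \in D & all (fun x => x \in D) r] := h.
rewrite !map_cons !altE -!map_cons IH; last by case/andP: h.
rewrite !fcv //.
Qed.

Lemma mem_map_D p x : all (fun x => x \in D) p -> x \in D ->
  (f x \in map f p) = (x \in p).
Proof.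
move=> /allP hp hx; apply/mapP/idP => [[y hy /finj]|]; last by move=> h; exists x.
by move=> e; rewrite e //; apply: hp.
Qed.

Lemma pairs_map p : pairs (map f p) = map (fun e => (f e.1, f e.2)) (pairs p).
Proof. by elim: p => [|a [|b r] IH] //=; rewrite -IH. Qed.

Lemma ok_map S p1 p2 :
  all (fun x => x \in D) (S ++ p1 ++ p2) ->
  ok cvA S p1 p2 -> ok cvB (map f S) (map f p1) (map f p2).
Proof.
rewrite !all_cat => /and3P[hS h1 h2].
case/and5P=> u1 u2 a1 a2 /and4P[s1 s2 i12 ed].
have hD := fun p x (hp : all (fun x => x \in D) p) => allP hp x.
apply/and5P; split; [| | | | apply/and4P; split].
- by rewrite (map_inj_in_uniq (fun x y hx hy => finj (hD _ _ h1 hx) (hD _ _ h1 hy))).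
- by rewrite (map_inj_in_uniq (fun x y hx hy => finj (hD _ _ h2 hx) (hD _ _ h2 hy))).
- by rewrite alt_map.
- by rewrite alt_map.
- rewrite all_map; apply/allP => x hx /=; rewrite mem_map_D //; last exact: hD hS _.
  exact: (allP s1).
- rewrite all_map; apply/allP => x hx /=; rewrite mem_map_D //; last exact: hD hS _.
  exact: (allP s2).
- rewrite all_map; apply/allP => x hx /=; rewrite !mem_map_D //; try exact: hD h1 _.
  exact: (allP i12).
- rewrite !pairs_map all_map; apply/allP => e he /=; rewrite all_map.
  apply/allP => g hg /=.
  have /andP[e1 e2] := pairs_mem he; have /andP[g1 g2] := pairs_mem hg.
  have := allP (allP ed e he) g hg.
  have E x y : x \in D -> y \in D -> (f x == f y) = (x == y).
    by move=> hx hy; apply/eqP/eqP => [/finj|->]; [apply|].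
  rewrite /sameedge !E //; try exact: (hD _ _ h1); try exact: (hD _ _ h2).
Qed.
End Transfer.

Section Sound.
Variable T : finType.
Variable cv : T -> T -> bool.
Hypothesis cv_sym : forall a b, cv a b = cv b a.
Variable col : coloring T 2.
Hypothesis hcol : forall a b, a != b -> col [set a; b] = if cv a b then ord_max else ord0.
Let adj : rel T := fun x y => x != y.

Fixpoint pE (p : seq T) : {set {set T}} :=
  match p with
  | a :: r => match r with
              | b :: _ => [set a; b] |: pE r
              | [::] => set0 end
  | [::] => set0 end.

Definition pV (p : seq T) : {set T} := [set x in p].

Lemma pEcons a b r : pE [:: a, b & r] = [set a; b] |: pE (b :: r).
Proof. by []. Qed.

Lemma pE_sub p e : e \in pE p -> e \subset pV p.
Proof.
elim: p => [|a [|b r] IH]; [by rewrite /= inE|by rewrite /= inE|].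
rewrite pEcons in_setU1 => /orP[/eqP ->|/IH].
  by apply/subsetP => x; rewrite !inE => /orP[] ->; rewrite ?orbT.
move/subsetP=> h; apply/subsetP => x /h; rewrite !inE => ->; by rewrite orbT.
Qed.

Lemma pE_pairs p e : e \in pE p -> exists2 pr, pr \in pairs p & e = [set pr.1; pr.2].
Proof.
elim: p => [|a [|b r] IH]; [by rewrite /= inE|by rewrite /= inE|].
rewrite pEcons in_setU1 => /orP[/eqP ->|/IH [pr h1 h2]].
  by exists (a, b); rewrite // inE eqxx.
by exists pr => //=; rewrite inE h1 orbT.
Qed.

Lemma set2_eq (a b c d : T) : [set a; b] = [set c; d] -> sameedge (a, b) (c, d).
Proof.
move=> E; rewrite /sameedge /=.
have ha : a \in [set c; d] by rewrite -E !inE eqxx.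
have hb : b \in [set c; d] by rewrite -E !inE eqxx orbT.
have hc : c \in [set a; b] by rewrite E !inE eqxx.
have hd : d \in [set a; b] by rewrite E !inE eqxx orbT.
move: ha hb hc hd; rewrite !inE.
by move=> /orP[]/eqP ? /orP[]/eqP ? /orP[]/eqP ? /orP[]/eqP ?; subst; rewrite !eqxx ?orbT.
Qed.

Lemma erel_sym (E : {set {set T}}) : symmetric (erel E).
Proof. by move=> x y; rewrite /erel setUC. Qed.

Lemma pE_tree p : uniq p -> p != [::] -> is_tree adj (pV p) (pE p).
Proof.
elim: p => [|a [|b r] IH] hu hne; first by rewrite eqxx in hne.
- split => //.
  + by rewrite /pE sub0set.
  + by move=> e; rewrite inE.
  + by apply/set0Pn; exists a; rewrite !inE.
  + by move=> x y; rewrite !inE => /eqP -> /eqP ->; apply: connect0.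
  + have -> : pE [:: a] = set0 by [].
    rewrite cards0 /pV (_ : [set x in [:: a]] = [set a]) ?cards1 //; by apply/setP=> x; rewrite !inE.
- move: hu => /andP [ha hu].
  have [Ie Is Ine Ic Icard] := IH hu isT.
  have hab : a != b by apply: contraNneq ha => ->; rewrite inE eqxx.
  have hVr : pV [:: a, b & r] = a |: pV (b :: r).
    by apply/setP => x; rewrite !inE.
  have hnot : [set a; b] \notin pE (b :: r).
    apply/negP => /pE_sub /subsetP /(_ a); rewrite !inE eqxx /= => /(_ isT).
    by move: ha; rewrite inE => /negPf ->.
  rewrite pEcons hVr; split.
  + apply/subsetP => e; rewrite in_setU1 => /orP[/eqP ->|/(subsetP Ie) //].
    rewrite inE; apply/existsP; exists a; apply/existsP; exists b. by rewrite eqxx andbT.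
  + move=> e; rewrite in_setU1 => /orP[/eqP ->|/pE_sub h].
      by apply/subsetP => x; rewrite !inE => /orP[] ->; rewrite ?orbT.
    by apply/subsetP => x /(subsetP h) hx; rewrite in_setU1 hx orbT.
  + by apply/set0Pn; exists a; rewrite in_setU1 eqxx.
  + have sub : subrel (erel (pE (b :: r))) (connect (erel ([set a; b] |: pE (b :: r)))).
      by move=> x y; rewrite /erel => h; apply: connect1; rewrite in_setU1 h orbT.
    have toa : forall x, x \in a |: pV (b :: r) -> connect (erel ([set a; b] |: pE (b :: r))) x a.
      move=> x; rewrite in_setU1 => /orP[/eqP -> //|hx].
      apply: connect_trans (_ : connect _ b a).
        by apply: (connect_sub sub); apply: Ic => //; rewrite !inE eqxx.
      by apply: connect1; rewrite /erel in_setU1 setUC eqxx.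
    move=> x y hx hy; apply: connect_trans (toa x hx) _.
    by rewrite (sym_connect_sym (@erel_sym _)); apply: toa.
  + rewrite [in RHS]cardsU1 cardsU1 hnot -Icard /pV inE ha. by rewrite addnA.
Qed.

Lemma pE_head y r e : uniq (y :: r) -> e \in pE (y :: r) -> y \in e ->
  exists z r', r = z :: r' /\ e = [set y; z].
Proof.
case: r => [|z r] hu; first by rewrite inE.
rewrite pEcons in_setU1 => /orP[/eqP -> _|]; first by exists z, r.
move=> /pE_sub /subsetP h /h; rewrite inE.
by move: hu => /= /andP[]; rewrite inE => /negPf ->.
Qed.

Lemma col2 a b : a != b -> col [set a; b] = if cv a b then ord_max else ord0.
Proof. exact: hcol. Qed.

Lemma alt_tail x s : alt cv (x :: s) -> alt cv s.
Proof. by case: s => [|y [|z r]] //; rewrite altE => /andP[]. Qed.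

Lemma pE_proper p : uniq p -> alt cv p -> proper_tree col (pE p).
Proof.
elim: p => [|x [|y r] IH] hu ha; try by move=> e1 e2; rewrite inE.
move: (hu) => /andP[hx hu'].
have altr : alt cv (y :: r) by apply: alt_tail ha.
have IH' := IH hu' altr.
have hxy : x != y by apply: contraNneq hx => ->; rewrite inE eqxx.
have key : forall e, e \in pE (y :: r) -> e :&: [set x; y] != set0 ->
    col [set x; y] != col e.
  move=> e he /set0Pn [w]; rewrite !inE => /andP[hw /orP[] /eqP ew].
    have := subsetP (pE_sub he) w hw; rewrite ew inE => hxr.
    by move: hx; rewrite hxr.
  subst w; have [z [r' [er ee]]] := pE_head hu' he hw; subst r e.
  have hyz : y != z by move: hu' => /= /andP[]; rewrite inE negb_or => /andP[].
  rewrite !col2 //.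
  move: ha; rewrite altE => /andP[hne _].
  by case: (cv x y) (cv y z) hne => [] [].
move=> e1 e2; rewrite pEcons !in_setU1 => /orP[/eqP->|h1] /orP[/eqP->|h2].
- by rewrite eqxx.
- by move=> _ hi; apply: key => //; rewrite setIC.
- by move=> _ hi; rewrite eq_sym; apply: key.
- exact: IH' _ _ h1 h2.
Qed.

Lemma I2_neq (i j : 'I_2) : i != j -> (i == ord0) != (j == ord0).
Proof. by case: i => [[|[|?]] ?]; case: j => [[|[|?]] ?]. Qed.

Lemma sound (S : seq T) p1 p2 : S != [::] -> ok cv S p1 p2 ->
  has_disjoint_proper_S_trees adj col [set x in S] 2.
Proof.
move=> hS /and5P[u1 u2 a1 a2 /and4P[s1 s2 i12 ed]].
have ne (p : seq T) : all (fun x => x \in p) S -> p != [::].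
  move: hS; case: S {s1 s2 i12} => // x S' _ /= /andP[]; by case: p.
have dis : [disjoint pE p1 & pE p2].
  rewrite -setI_eq0; apply/eqP/setP => e; rewrite !inE; apply/negP => /andP[h1 h2].
  have [pr hp ee] := pE_pairs h1; rewrite ee in h2.
  have [pr' hp' /set2_eq E] := pE_pairs h2.
  move: (allP (allP ed pr hp) pr' hp') E.
  by case: pr {hp ee h1 h2} => a b; case: pr' {hp'} => c d /= /negPf ->.
have int : pV p1 :&: pV p2 = [set x in S].
  apply/setP => x; rewrite !inE; apply/andP/idP => [[h1 h2]|h].
    by have := allP i12 x h1; rewrite h2.
  by rewrite (allP s1 x h) (allP s2 x h).
exists (fun i : 'I_2 => if i == ord0 then pV p1 else pV p2),
       (fun i : 'I_2 => if i == ord0 then pE p1 else pE p2).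
split.
- by move=> i; case: ifP => _; apply: pE_tree => //; apply: ne.
- move=> i; apply/subsetP => x; rewrite inE => hx.
  by case: ifP => _; rewrite inE; [apply: (allP s1) | apply: (allP s2)].
- by move=> i; case: ifP => _; apply: pE_proper.
- move=> i j /I2_neq; case: (i == ord0); case: (j == ord0) => //= _.
  by rewrite disjoint_sym.
- move=> i j /I2_neq; case: (i == ord0); case: (j == ord0) => //= _.
  by rewrite setIC.
Qed.

End Sound.

Definition gtab (i j : nat) : bool :=
  if (i == 4) && (j == 4) then false
  else if (i == 4) || (j == 4) then true
  else (i, j) \in [:: (0,1); (1,0); (0,3); (3,0); (1,2); (2,1)].

Definition kd (a : nat) : nat := if a < 4 then a else 4.
Definition colvn (a b : nat) : bool := gtab (kd a) (kd b).

Lemma kd_lt a : kd a < 5.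
Proof. by rewrite /kd; case: ifP => // /ltnW. Qed.

Lemma colvn_sym a b : colvn a b = colvn b a.
Proof.
have H : all (fun i => all (fun j => gtab i j == gtab j i) (iota 0 5)) (iota 0 5) by [].
rewrite /colvn; apply/eqP.
by have := allP (allP H _ (_ : kd a \in iota 0 5)) (kd b); rewrite !mem_iota !kd_lt => /(_ isT isT).
Qed.

Definition table : seq (nat * (seq nat * seq nat)) :=
  [:: (7, ([:: 1; 0; 2], [:: 0; 3; 1; 2]));
  (11, ([:: 0; 1; 3], [:: 0; 3; 2; 1]));
  (19, ([:: 0; 1; 3; 4], [:: 1; 2; 0; 4]));
  (35, ([:: 0; 1; 3; 5], [:: 1; 2; 0; 5]));
  (67, ([:: 0; 1; 3; 6], [:: 1; 2; 0; 6]));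
  (13, ([:: 0; 3; 2], [:: 0; 2; 1; 3]));
  (21, ([:: 2; 0; 4], [:: 0; 3; 2; 4]));
  (37, ([:: 2; 0; 5], [:: 0; 3; 2; 5]));
  (69, ([:: 2; 0; 6], [:: 0; 3; 2; 6]));
  (25, ([:: 0; 1; 3; 4], [:: 0; 3; 2; 4]));
  (41, ([:: 0; 1; 3; 5], [:: 0; 3; 2; 5]));
  (73, ([:: 0; 1; 3; 6], [:: 0; 3; 2; 6]));
  (49, ([:: 0; 4; 5], [:: 4; 2; 0; 5]));
  (81, ([:: 0; 4; 6], [:: 4; 2; 0; 6]));
  (97, ([:: 0; 5; 6], [:: 5; 2; 0; 6]));
  (14, ([:: 1; 2; 3], [:: 1; 3; 0; 2]));
  (22, ([:: 1; 0; 2; 4], [:: 1; 2; 3; 4]));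
  (38, ([:: 1; 0; 2; 5], [:: 1; 2; 3; 5]));
  (70, ([:: 1; 0; 2; 6], [:: 1; 2; 3; 6]));
  (26, ([:: 3; 1; 4], [:: 1; 2; 3; 4]));
  (42, ([:: 3; 1; 5], [:: 1; 2; 3; 5]));
  (74, ([:: 3; 1; 6], [:: 1; 2; 3; 6]));
  (50, ([:: 1; 4; 5], [:: 4; 3; 1; 5]));
  (82, ([:: 1; 4; 6], [:: 4; 3; 1; 6]));
  (98, ([:: 1; 5; 6], [:: 5; 3; 1; 6]));
  (28, ([:: 2; 3; 4], [:: 3; 0; 2; 4]));
  (44, ([:: 2; 3; 5], [:: 3; 0; 2; 5]));
  (76, ([:: 2; 3; 6], [:: 3; 0; 2; 6]));
  (52, ([:: 2; 4; 5], [:: 4; 0; 2; 5]));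
  (84, ([:: 2; 4; 6], [:: 4; 0; 2; 6]));
  (100, ([:: 2; 5; 6], [:: 5; 0; 2; 6]));
  (56, ([:: 3; 4; 5], [:: 4; 1; 3; 5]));
  (88, ([:: 3; 4; 6], [:: 4; 1; 3; 6]));
  (104, ([:: 3; 5; 6], [:: 5; 1; 3; 6]));
  (112, ([:: 4; 0; 2; 5; 6], [:: 4; 5; 1; 3; 6]))].

Definition wit (s : seq nat) : seq nat * seq nat :=
  let k := sumn (map (fun a => 2 ^ a) s) in
  (nth (0, ([::], [::])) table (find (fun e => e.1 == k) table)).2.

Definition chk (a b c : nat) : bool :=
  let w := wit [:: a; b; c] in
  ok colvn [:: a; b; c] w.1 w.2 && all (fun u => u \in [:: 0; 1; 2; 3; a; b; c]) (w.1 ++ w.2).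

Definition checkall : bool :=
  all (fun a => all (fun b => all (fun c => uniq [:: a; b; c] ==> chk a b c)
     (iota 0 7)) (iota 0 7)) (iota 0 7).

Lemma checkall_true : checkall = true.
Proof. by vm_compute. Qed.

Lemma chkP a b c : a < 7 -> b < 7 -> c < 7 -> uniq [:: a; b; c] -> chk a b c.
Proof.
move=> ha hb hc hu.
have := checkall_true; rewrite /checkall => /allP /(_ a); rewrite mem_iota ha => /(_ isT).
move=> /allP /(_ b); rewrite mem_iota hb => /(_ isT).
by move=> /allP /(_ c); rewrite mem_iota hc hu => /(_ isT).
Qed.

Definition gens (sv : seq nat) := filter (fun v => 4 <= v) sv.
Definition menc (sv : seq nat) (v : nat) := if v < 4 then v else 4 + index v (gens sv).
Definition hdec (sv : seq nat) (u : nat) := if u < 4 then u else nth 0 (gens sv) (u - 4).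

Definition colK n (e : {set 'I_n}) : 'I_2 :=
  if [exists a, exists b, (a != b) && (e == [set a; b]) && colvn a b] then ord_max else ord0.

Lemma colK2 n (a b : 'I_n) : a != b ->
  colK [set a; b] = if colvn a b then ord_max else ord0.
Proof.
move=> hab; rewrite /colK; congr (if _ then _ else _).
apply/existsP/idP => [[a' /existsP [b' /andP[/andP[_ /eqP E] c]]]|h].
  move: (set2_eq E); rewrite /sameedge /= => /orP[]/andP[/eqP -> /eqP ->] //.
  by rewrite colvn_sym.
by exists a; apply/existsP; exists b; rewrite hab eqxx h.
Qed.

Lemma hdec_menc sv v : v \in sv -> hdec sv (menc sv v) = v.
Proof.
move=> hv; case: (ltnP v 4) => h; first by rewrite /menc /hdec h h.
have h' : (v < 4) = false by rewrite ltnNge h.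
have h'' : (4 + index v (gens sv) < 4) = false by rewrite ltnNge leq_addr.
rewrite /menc /hdec h' h'' addKn nth_index //.
by rewrite mem_filter hv andbT.
Qed.

Lemma menc_lt sv v : size sv <= 3 -> v \in sv -> menc sv v < 7.
Proof.
move=> hs hv; rewrite /menc; case: ifP => [h|h]; first by apply: leq_trans h _.
have hg : v \in gens sv by rewrite mem_filter hv andbT leqNgt h.
rewrite -index_mem in hg.
have : size (gens sv) <= 3 by rewrite size_filter; apply: leq_trans (count_size _ _) hs.
move: hg; rewrite /gens; move: (index _ _) (size _) => i k hi hk.
by rewrite -[7]/(4 + 3) ltn_add2l; apply: leq_trans hi hk.
Qed.

Lemma upper n : 4 <= n -> forall S : {set 'I_n}, #|S| = 3 ->
  has_disjoint_proper_S_trees (Kn n) (@colK n) S 2.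
Proof.
case: n => // n' hn S hS.
have us : uniq (enum S) := enum_uniq _.
have sz : size (enum S) = 3 by rewrite -cardE.
rewrite -(set_enum S).
move: us sz; set s := enum S => us sz.
set sv := map val s.
have szv : size sv <= 3 by rewrite size_map sz.
have svlt : forall v, v \in sv -> v < n'.+1 by move=> v /mapP [x _ ->]; apply: ltn_ord.
set mS := map (menc sv) sv.
have mSlt : forall u, u \in mS -> u < 7.
  by move=> u /mapP [v hv ->]; exact: menc_lt szv hv.
have umS : uniq mS.
  rewrite map_inj_in_uniq; first by rewrite map_inj_uniq //; apply: val_inj.
  by move=> v v' hv hv' e; rewrite -(hdec_menc hv) -(hdec_menc hv') e.
set w := wit mS.
have hchk : ok colvn mS w.1 w.2 && all (fun u => u \in [:: 0; 1; 2; 3] ++ mS) (w.1 ++ w.2).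
  have e3 : size mS = 3 by rewrite size_map size_map.
  move: umS mSlt; rewrite /w; case: (mS) e3 => [|a [|b [|c [|]]]] // _ hu hl.
  by apply: chkP => //; apply: hl; rewrite !inE eqxx ?orbT.
case/andP: hchk => hok hD.
pose D := [:: 0; 1; 2; 3] ++ mS.
have PD : forall u, u \in D ->
    (u < 4 /\ hdec sv u = u) \/ (exists2 v, v \in sv & 4 <= v /\ u = menc sv v).
  move=> u; rewrite mem_cat => /orP[hu|/mapP [v hv ->]].
    have hu4 : u < 4 by move: hu; rewrite !inE => /or4P[] /eqP ->.
    by left; split => //; rewrite /hdec hu4.
  case: (ltnP v 4) => hv4.
    by left; rewrite /menc hv4; split => //; rewrite /hdec hv4.
  by right; exists v.
have hdlt : forall u, u \in D -> hdec sv u < n'.+1.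
  move=> u /PD [[h ->]|[v hv [_ ->]]]; last by rewrite hdec_menc // svlt.
  by apply: leq_trans h _.
have kdP : forall u, u \in D -> kd (hdec sv u) = kd u.
  move=> u /PD [[h ->] //|[v hv [h4 ->]]].
  have h' : (v < 4) = false by rewrite ltnNge h4.
  have h'' : (4 + index v (gens sv) < 4) = false by rewrite ltnNge leq_addr.
  by rewrite hdec_menc // /kd /menc h' h''.
pose H := fun u => (inord (hdec sv u) : 'I_n'.+1).
have valH : forall u, u \in D -> val (H u) = hdec sv u by move=> u hu; rewrite /H /= inordK // hdlt.
have Hinj : {in D &, injective H}.
  move=> u u' hu hu' /(congr1 val); rewrite !valH //.
  case: (PD u hu) => [[h1 ->]|[v hv [h4 ->]]]; case: (PD u' hu') => [[h1' ->]|[v' hv' [h4' ->]]] //.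
  - by move=> e; move: h1; rewrite e hdec_menc // ltnNge h4'.
  - by move=> e; move: h1'; rewrite -e hdec_menc // ltnNge h4.
  - by rewrite !hdec_menc // => ->.
have Hcv : {in D &, forall u v, colvn (H u) (H v) = colvn u v}.
  by move=> u v hu hv; rewrite !valH // /colvn !kdP.
have allD : all (fun x => x \in D) (mS ++ w.1 ++ w.2).
  rewrite all_cat; apply/andP; split; last exact: hD.
  by apply/allP => u hu; rewrite mem_cat hu orbT.
have okH := @ok_map _ _ colvn (fun u v : 'I_n'.+1 => colvn u v) H D Hinj Hcv mS w.1 w.2 allD hok.
have mSH : map H mS = s.
  rewrite -map_comp -map_comp -[RHS]map_id; apply/eq_in_map => x hx /=.
  have hv : val x \in sv by apply: map_f.
  apply: val_inj; rewrite /= inordK ?hdec_menc //.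
rewrite mSH in okH.
have sne : s != [::] by rewrite -size_eq0 sz.
exact: (@sound _ (fun u v : 'I_n'.+1 => colvn u v) (@colK _) (fun a b => @colK2 _ a b) s _ _ sne okH).
Qed.

Lemma lower n : 4 <= n -> forall c (col : coloring 'I_n c),
  kl_proper_coloring (Kn n) 3 2 col -> 2 <= c.
Proof.
case: n => // n' hn c col hk.
pose x0 : 'I_n'.+1 := inord 0.
pose x1 : 'I_n'.+1 := inord 1.
pose x2 : 'I_n'.+1 := inord 2.
have vx : forall k, k < 4 -> val (inord k : 'I_n'.+1) = k.
  by move=> k hk'; rewrite /= inordK //; apply: leq_trans hk' hn.
have d01 : x0 != x1 by apply/eqP => /(congr1 val); rewrite !vx.
have d02 : x0 != x2 by apply/eqP => /(congr1 val); rewrite !vx.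
have d12 : x1 != x2 by apply/eqP => /(congr1 val); rewrite !vx.
have hS3 : #|[set x0; x1; x2]| = 3.
  rewrite -setUA cardsU1 cards2 d12 !inE negb_or d01 d02 //.
case: c col hk => [|[|c]] col hk //.
  by case: (col set0).
exfalso.
have [V [E [Ht HS Hp _ _]]] := hk _ hS3.
have [Ie Is Ine Ic Icard] := Ht ord0.
have Hp0 := Hp ord0.
set E0 := E ord0 in Ie Is Ic Icard Hp0.
have cst : forall e1 e2, col e1 = col e2 by move=> e1 e2; rewrite (ord1 (col e1)) (ord1 (col e2)).
have dis : forall e1 e2, e1 \in E0 -> e2 \in E0 -> e1 != e2 -> e1 :&: e2 = set0.
  move=> e1 e2 h1 h2 hne; apply/eqP; apply/negPn/negP => h.
  by have := Hp0 _ _ h1 h2 hne h; rewrite (cst e1 e2) eqxx.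
pose P u := (u == x0) || ([set x0; u] \in E0).
have step : forall v y, P v -> erel E0 v y -> P y.
  move=> v y; rewrite /P /erel => /orP[/eqP -> h|hv h]; first by rewrite h orbT.
  have [e|ne] := eqVneq [set x0; v] [set v; y].
    have : y \in [set x0; v] by rewrite e !inE eqxx orbT.
    by rewrite !inE => /orP[->//|/eqP ->]; rewrite hv orbT.
  have := dis _ _ hv h ne; move/setP => /(_ v); rewrite !inE !eqxx orbT.
  by [].
have claim : forall u, connect (erel E0) x0 u -> P u.
  have gen : forall p v, P v -> path (erel E0) v p -> P (last v p).
    elim=> [|y p IH] v Pv //= /andP[evy hp].
    exact: IH (step _ _ Pv evy) hp.
  move=> u /connectP [p hp ->]; apply: gen hp.
  by rewrite /P eqxx.
have V0 : forall x, x \in [set x0; x1; x2] -> x \in V ord0 by move=> x; apply/subsetP.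
have hx0 : x0 \in V ord0 by apply: V0; rewrite !inE eqxx.
have hx1 : x1 \in V ord0 by apply: V0; rewrite !inE eqxx orbT.
have hx2 : x2 \in V ord0 by apply: V0; rewrite !inE eqxx !orbT.
have c1 := claim x1 (Ic _ _ hx0 hx1).
have c2 := claim x2 (Ic _ _ hx0 hx2).
move: c1 c2; rewrite /P eq_sym (negPf d01) eq_sym (negPf d02) /= => h1 h2.
have ne : [set x0; x1] != [set x0; x2].
  apply/eqP => e; have : x2 \in [set x0; x1] by rewrite e !inE eqxx orbT.
  by rewrite !inE eq_sym (negPf d02) eq_sym (negPf d12).
have := dis _ _ h1 h2 ne; move/setP => /(_ x0); rewrite !inE !eqxx.
by [].
Qed.

Theorem theorem2p4 (n : nat) : 4 <= n -> px_eq (Kn n) 3 2 2.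
Proof.
move=> hn; split; last exact: lower.
exists (@colK n) => S hS; exact: upper.
Qed.
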